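(* Let $K$ be a field, $q\in K\setminus\{0\}$ not a root of unity, and let $A=K\langle a,b\rangle/(ab-qba)$ be the coordinate ring of the quantum plane. Let $w=ab$ (a normal element), and let $\sigma$ be the automorphism of $A$ with $\sigma(a)=q^{-1}a$, $\sigma(b)=qb$, so that $wy=\sigma(y)w$ for all $y\in A$. Let $J=A(ab-1)$ and $x=a-1$. Then: (a) $J$ is a maximal left ideal of $A$, and for every $m\ge 0$ there is no $c\in A$ with $\sigma^m(x)c-1\in J$; (b) the left $A$-module $N=A/Ax$ is not artinian, and its nonzero submodules are exactly the modules $w^mN$, $m\ge 0$, which form a strictly descending chain $N\supsetneq wN\supsetneq w^2N\supsetneq\cdots$. *)

(* Defs.v *)
From HB Require Import structures.
From mathcomp Require Import all_boot all_order all_algebra.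
Set Implicit Arguments. Unset Strict Implicit. Unset Printing Implicit Defensive.
Import Order.TTheory GRing.Theory Num.Theory.
Local Open Scope ring_scope.

(* The quantum plane A = K<a,b>/(ab - q ba), presented via its PBW basis
   a^i b^j.  An element  sum_{i,j} c_{ij} a^i b^j  is stored as the
   bivariate polynomial  sum_i (sum_j c_{ij} Y^j) X^i  in {poly {poly K}}
   (outer variable = a, inner variable = b); this representation is
   canonical, so Leibniz equality is equality in A.  Addition, negation,
   0 and 1 are those of {poly {poly K}}; the (noncommutative) product is
   qmul, determined by  (a^i b^j)(a^k b^l) = q^{-jk} a^{i+k} b^{j+l}
   (equivalently  ba = q^{-1} ab, i.e. ab - q ba = 0). *)

Section QuantumPlane.
Variables (K : fieldType) (q : K).

Definition qp := {poly {poly K}}.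

Definition qmono (c : K) (i j : nat) : qp := (c *: 'X^j)%:P * 'X^i.

Definition qcoef (p : qp) (i j : nat) : K := (p`_i)`_j.

Definition qmul (p r : qp) : qp :=
  \sum_(i < size p) \sum_(j < size p`_i) \sum_(k < size r) \sum_(l < size r`_k)
     qmono (qcoef p i j * qcoef r k l * q ^- (j * k)) (i + k) (j + l).

Definition qa : qp := qmono 1 1 0.
Definition qb : qp := qmono 1 0 1.

Definition qpow (y : qp) (m : nat) : qp := iter m (qmul y) 1.

(* the automorphism sigma: a |-> q^-1 a, b |-> q b, i.e.
   a^i b^j |-> q^(j - i) a^i b^j *)
Definition qsigma (p : qp) : qp :=
  \sum_(i < size p) \sum_(j < size p`_i)
     qmono (qcoef p i j * q ^ (j%:Z - i%:Z)) i j.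

Definition left_ideal (I : qp -> Prop) : Prop :=
  I 0 /\ (forall x y, I x -> I y -> I (x - y)) /\
  (forall r x, I x -> I (qmul r x)).

Definition maximal_left_ideal (I : qp -> Prop) : Prop :=
  left_ideal I /\ ~ I 1 /\
  (forall L : qp -> Prop, left_ideal L -> (forall y, I y -> L y) ->
     (forall y, L y <-> I y) \/ L 1).

Definition lprincipal (g : qp) : qp -> Prop := fun y => exists c, y = qmul c g.

(* Submodules of the cyclic left module N = A/Ax are represented by their
   full preimages in A, i.e. left ideals L of A containing Ax. *)
Definition quot_submodule (x : qp) (L : qp -> Prop) : Prop :=
  left_ideal L /\ (forall y, lprincipal x y -> L y).

Definition quot_nonzero (x : qp) (L : qp -> Prop) : Prop :=
  exists y, L y /\ ~ lprincipal x y.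

Definition quot_artinian (x : qp) : Prop :=
  forall L : nat -> qp -> Prop,
    (forall n, quot_submodule x (L n)) ->
    (forall n y, L n.+1 y -> L n y) ->
    exists n, forall m, (n <= m)%N -> forall y, L m y <-> L n y.

(* preimage in A of the submodule w^m N of N = A/Ax *)
Definition quot_wpow (w x : qp) (m : nat) : qp -> Prop :=
  fun y => exists u v, y = qmul (qpow w m) u + qmul v x.

End QuantumPlane.

(* Main.v *)
Require Import Defs.
From HB Require Import structures.
From mathcomp Require Import all_boot all_order all_algebra.
From mathcomp Require Import zify ring.
From Stdlib Require Import Classical.
Set Implicit Arguments. Unset Strict Implicit. Unset Printing Implicit Defensive.
Import Order.TTheory GRing.Theory Num.Theory.
Local Open Scope ring_scope.

Section QP.
Variables (K : fieldType) (q : K).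
Local Notation qp := (qp K).

Definition qsum (T : zmodType) (F : K -> nat -> nat -> T) (p : qp) : T :=
  \sum_(i < size p) \sum_(j < size p`_i) F (qcoef p i j) i j.

Definition qdeg (p : qp) : nat := \max_(i < size p) size (p`_i)%R.

Lemma qdegP (p : qp) i : (size (p`_i)%R <= qdeg p)%N.
Proof.
case: (ltnP i (size p)) => hi.
  by apply: (@leq_bigmax_cond _ _ _ (Ordinal hi)).
by rewrite nth_default // size_poly0.
Qed.

Lemma qcoef_out (p : qp) i j : (size p <= i)%N -> qcoef p i j = 0.
Proof. by move=> h; rewrite /qcoef (nth_default _ h) coef0. Qed.

Lemma qcoef_out2 (p : qp) i j : (qdeg p <= j)%N -> qcoef p i j = 0.
Proof. by move=> h; rewrite /qcoef nth_default //; apply: leq_trans (qdegP p i) h. Qed.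

Lemma qsum_widen (T : zmodType) (F : K -> nat -> nat -> T) (p : qp) N M :
  (forall i j, F 0 i j = 0) -> (size p <= N)%N -> (qdeg p <= M)%N ->
  qsum F p = \sum_(i < N) \sum_(j < M) F (qcoef p i j) i j.
Proof.
move=> F0 hN hM; rewrite /qsum.
rewrite (big_ord_widen N (fun i => \sum_(j < size p`_i) F (qcoef p i j) i j) hN).
rewrite big_mkcond /=; apply: eq_bigr => i _.
case: ifP => hi.
  rewrite (big_ord_widen M (fun j => F (qcoef p i j) i j) (leq_trans (qdegP p i) hM)).
  rewrite big_mkcond /=; apply: eq_bigr => j _.
  case: ifP => // hj; rewrite /qcoef nth_default ?F0 //; by rewrite leqNgt hj.
rewrite big1 // => j _; rewrite qcoef_out ?F0 //; by rewrite leqNgt hi.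
Qed.

Lemma qsumD (T : zmodType) (F : K -> nat -> nat -> T) (p r : qp) :
  (forall i j, F 0 i j = 0) -> (forall c d i j, F (c + d) i j = F c i j + F d i j) ->
  qsum F (p + r) = qsum F p + qsum F r.
Proof.
move=> F0 FD.
pose N := (size p + size r + size (p + r)%R)%N.
pose M := (qdeg p + qdeg r + qdeg (p + r)%R)%N.
rewrite !(@qsum_widen _ _ _ N M) //; try (rewrite /N /M; lia).
rewrite -big_split; apply: eq_bigr => i _; rewrite -big_split; apply: eq_bigr => j _.
by rewrite /qcoef coefD coefD FD.
Qed.

Lemma qsum0 (T : zmodType) (F : K -> nat -> nat -> T) : qsum F 0 = 0.
Proof. by rewrite /qsum size_poly0 big_ord0. Qed.

Lemma qsumF (T : zmodType) (F G : K -> nat -> nat -> T) (p : qp) :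
  qsum (fun c i j => F c i j + G c i j) p = qsum F p + qsum G p.
Proof. rewrite /qsum -big_split; apply: eq_bigr => i _; by rewrite -big_split. Qed.

Lemma qsum_ext (T : zmodType) (F G : K -> nat -> nat -> T) (p : qp) :
  (forall c i j, F c i j = G c i j) -> qsum F p = qsum G p.
Proof. by move=> h; rewrite /qsum; apply: eq_bigr => i _; apply: eq_bigr => j _. Qed.

Lemma qcoef_qmono (c : K) i j i' j' :
  qcoef (qmono c i j) i' j' = if (i' == i) && (j' == j) then c else 0.
Proof.
rewrite /qcoef /qmono mulrC coefXnM.
case: ltnP => hi.
  by rewrite coef0; case: eqP => // ?; subst; rewrite ltnn in hi.
rewrite coefC; case: (eqVneq i' i) => [->|ne].
  by rewrite subnn eqxx /= coefZ coefXn; case: eqP => _; rewrite ?mulr1 ?mulr0.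
have : (i' - i != 0)%N by rewrite subn_eq0 -ltnNge ltn_neqAle eq_sym ne hi.
by move/negbTE => ->; rewrite coef0 /=.
Qed.

Lemma qmono0 i j : qmono (0 : K) i j = 0.
Proof. by rewrite /qmono scale0r mul0r. Qed.

Lemma qmonoD (c d : K) i j : qmono (c + d) i j = qmono c i j + qmono d i j.
Proof. by rewrite /qmono scalerDl polyCD mulrDl. Qed.

Lemma size_qmono (c : K) i j : (size (qmono c i j) <= i.+1)%N.
Proof.
rewrite /qmono; apply: leq_trans (size_polyMleq _ _) _.
rewrite size_polyXn; case: (size _) (size_polyC_leq1 (c *: 'X^j)) => [|[|]] //.
Qed.

Lemma qdeg_qmono (c : K) i j : (qdeg (qmono c i j) <= j.+1)%N.
Proof.
rewrite /qdeg; apply/bigmax_leqP => -[k hk] _ /=; move: hk => _.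
rewrite /qmono mulrC coefXnM; case: ltnP => _; first by rewrite size_poly0.
rewrite coefC; case: eqP => _; last by rewrite size_poly0.
by apply: leq_trans (size_scale_leq _ _) _; rewrite size_polyXn.
Qed.

Lemma qsum_qmono (T : zmodType) (F : K -> nat -> nat -> T) (c : K) i j :
  (forall i j, F 0 i j = 0) -> qsum F (qmono c i j) = F c i j.
Proof.
move=> F0; rewrite (@qsum_widen _ _ _ i.+1 j.+1) ?size_qmono ?qdeg_qmono //.
rewrite (bigD1 (Ordinal (ltnSn i))) //= [X in _ + X]big1 => [|k hk]; last first.
  rewrite big1 // => l _; rewrite qcoef_qmono.
  by move: hk; rewrite -val_eqE /= => /negbTE -> /=; rewrite F0.
rewrite addr0 (bigD1 (Ordinal (ltnSn j))) //= [X in _ + X]big1 => [|l hl].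
  by rewrite qcoef_qmono !eqxx addr0.
by rewrite qcoef_qmono eqxx; move: hl; rewrite -val_eqE /= => /negbTE -> /=; rewrite F0.
Qed.


Lemma sum_delta (T : zmodType) n k (F : nat -> T) :
  \sum_(j < n) (if k == j :> nat then F j else 0) = if (k < n)%N then F k else 0.
Proof.
rewrite -(big_ord1_eq +%R F k n) [RHS]big_mkcond; apply: eq_bigr => j _.
by rewrite eq_sym.
Qed.

Lemma qsum_zero (T : zmodType) (F : K -> nat -> nat -> T) p :
  (forall c i j, F c i j = 0) -> qsum F p = 0.
Proof. by move=> h; rewrite /qsum big1 // => i _; rewrite big1. Qed.

Lemma qcoef_qsum (F : K -> nat -> nat -> qp) p i' j' :
  qcoef (qsum F p) i' j' = qsum (fun c i j => qcoef (F c i j) i' j') p.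
Proof.
rewrite /qcoef /qsum !coef_sum; apply: eq_bigr => i _.
by rewrite !coef_sum.
Qed.

Lemma qcoefD (p r : qp) i j : qcoef (p + r) i j = qcoef p i j + qcoef r i j.
Proof. by rewrite /qcoef !coefD. Qed.

Lemma qdecomp (p : qp) : qsum (@qmono K) p = p.
Proof.
apply/polyP => i'; apply/polyP => j'.
rewrite -[LHS]/(qcoef _ i' j') -[RHS]/(qcoef _ i' j') qcoef_qsum.
rewrite (@qsum_widen _ _ _ (size p + i'.+1) (qdeg p + j'.+1)); last 3 first.
- by move=> i j; rewrite qmono0 /qcoef coef0 coef0.
- by rewrite leq_addr.
- by rewrite leq_addr.
under eq_bigr do under eq_bigr do rewrite qcoef_qmono.
transitivity (\sum_(i < size p + i'.+1) (if i' == i then qcoef p i j' else 0)).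
  apply: eq_bigr => i _; case: eqP => [<-|_] /=.
    rewrite (sum_delta _ _ (fun j => qcoef p i' j)).
    case: ltnP => // h; rewrite qcoef_out2 //; move: h; lia.
  by rewrite big1.
rewrite (sum_delta _ _ (fun i => qcoef p i j')); case: ltnP => // h.
rewrite qcoef_out //; move: h; lia.
Qed.

Lemma qind (P : qp -> Prop) :
  P 0 -> (forall p r, P p -> P r -> P (p + r)) ->
  (forall c i j, P (qmono c i j)) -> forall p, P p.
Proof.
move=> P0 PD Pm p; rewrite -(qdecomp p) /qsum.
apply: big_ind => // i _; apply: big_ind => //.
Qed.

Lemma qmulE (p r : qp) : qmul q p r =
  qsum (fun c i j => qsum (fun c' k l => qmono (c * c' * q ^- (j * k)) (i + k) (j + l)) r) p.
Proof. by []. Qed.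

Lemma qmulDl (p1 p2 r : qp) : qmul q (p1 + p2) r = qmul q p1 r + qmul q p2 r.
Proof.
rewrite !qmulE qsumD //.
- by move=> i j; apply: qsum_zero => c k l; rewrite !mul0r qmono0.
- move=> c d i j; rewrite -qsumF; apply: qsum_ext => c' k l.
  by rewrite !mulrDl qmonoD.
Qed.

Lemma qmulDr (p r1 r2 : qp) : qmul q p (r1 + r2) = qmul q p r1 + qmul q p r2.
Proof.
rewrite !qmulE -qsumF; apply: qsum_ext => c i j; rewrite qsumD //.
- by move=> k l; rewrite mulr0 mul0r qmono0.
- by move=> c1 d k l; rewrite mulrDr mulrDl qmonoD.
Qed.

Lemma qmul0l (r : qp) : qmul q 0 r = 0.
Proof. by rewrite qmulE qsum0. Qed.

Lemma qmul0r (p : qp) : qmul q p 0 = 0.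
Proof. by rewrite qmulE; apply: qsum_zero => c i j; rewrite qsum0. Qed.

Lemma qmul_mono (c c' : K) i j k l :
  qmul q (qmono c i j) (qmono c' k l) = qmono (c * c' * q ^- (j * k)) (i + k) (j + l).
Proof.
rewrite qmulE qsum_qmono; last by move=> i' j'; apply: qsum_zero => ? ? ?; rewrite !mul0r qmono0.
by rewrite qsum_qmono // => k' l'; rewrite mulr0 mul0r qmono0.
Qed.

Lemma qmulNl (p r : qp) : qmul q (- p) r = - qmul q p r.
Proof. by apply/eqP; rewrite -addr_eq0 -qmulDl addNr qmul0l. Qed.

Lemma qmulNr (p r : qp) : qmul q p (- r) = - qmul q p r.
Proof. by apply/eqP; rewrite -addr_eq0 -qmulDr addNr qmul0r. Qed.

Lemma qmulBl (p1 p2 r : qp) : qmul q (p1 - p2) r = qmul q p1 r - qmul q p2 r.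
Proof. by rewrite qmulDl qmulNl. Qed.

Lemma qmulBr (p r1 r2 : qp) : qmul q p (r1 - r2) = qmul q p r1 - qmul q p r2.
Proof. by rewrite qmulDr qmulNr. Qed.

Lemma qmulA (p r s : qp) : qmul q (qmul q p r) s = qmul q p (qmul q r s).
Proof.
elim/qind: p r s => [|p1 p2 h1 h2|c i j] r s.
- by rewrite !qmul0l.
- by rewrite !qmulDl h1 h2.
elim/qind: r s => [|r1 r2 h1 h2|c' k l] s.
- by rewrite qmul0r qmul0l qmul0r.
- by rewrite qmulDr !qmulDl qmulDr h1 h2.
elim/qind: s => [|s1 s2 h1 h2|c'' u v].
- by rewrite !qmul0r.
- by rewrite !qmulDr h1 h2.
rewrite !qmul_mono !addnA; congr qmono.
rewrite -!mulrA; congr (_ * (_ * _)); rewrite mulrCA; congr (_ * _).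
by rewrite -!invfM -!exprD; congr (_^-1); congr (_ ^+ _); lia.
Qed.

Lemma qone : (1 : qp) = qmono 1 0 0.
Proof. by rewrite /qmono scale1r !expr0 mulr1. Qed.

Lemma qmul1r (p : qp) : qmul q p 1 = p.
Proof.
elim/qind: p => [|p1 p2 h1 h2|c i j]; first by rewrite qmul0l.
  by rewrite qmulDl h1 h2.
by rewrite qone qmul_mono muln0 expr0 invr1 !mulr1 !addn0.
Qed.

Lemma qmul1l (p : qp) : qmul q 1 p = p.
Proof.
elim/qind: p => [|p1 p2 h1 h2|c i j]; first by rewrite qmul0r.
  by rewrite qmulDr h1 h2.
by rewrite qone qmul_mono mul0n expr0 invr1 !mulr1 mul1r.
Qed.


Lemma qmonoN (c : K) i j : qmono (- c) i j = - qmono c i j.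
Proof. by apply/eqP; rewrite -addr_eq0 -qmonoD addNr qmono0. Qed.

Lemma qmul_sumr (p : qp) n (F : 'I_n -> qp) :
  qmul q p (\sum_(k < n) F k) = \sum_(k < n) qmul q p (F k).
Proof. by rewrite (big_morph (qmul q p) (qmulDr p) (qmul0r p)). Qed.

Lemma polyC_qsum (s : {poly K}) : (s%:P : qp) = \sum_(k < size s) qmono s`_k 0 k.
Proof.
rewrite -{1}(coefK s) poly_def raddf_sum /=; apply: eq_bigr => k _.
by rewrite /qmono expr0 mulr1.
Qed.

Lemma qsumZ (F : K -> nat -> nat -> K) (a : K) p :
  qsum (fun c i j => a * F c i j) p = a * qsum F p.
Proof. by rewrite /qsum mulr_sumr; apply: eq_bigr => i _; rewrite mulr_sumr. Qed.

End QP.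

Lemma sep (K : fieldType) (I : eqType) (U : (I -> K) -> Prop) (lam : I -> K) :
  injective lam ->
  (forall f g, (forall z, f z = g z) -> U f -> U g) ->
  (forall f g, U f -> U g -> U (fun z => f z - g z)) ->
  (forall f c, U f -> U (fun z => c * f z)) ->
  (forall f, U f -> U (fun z => lam z * f z)) ->
  forall f (s : seq I) z0, U f -> (forall z, z \notin s -> f z = 0) ->
  U (fun z => if z == z0 then f z0 else 0).
Proof.
move=> linj Uext UB UZ UL f0 s0 z0 hf0 hs0.
suff H : forall (s : seq I) f, U f -> (forall z, z \notin z0 :: s -> f z = 0) ->
    U (fun z => if z == z0 then f z0 else 0).
  apply: (H s0 f0 hf0) => z; rewrite inE negb_or => /andP[_]; exact: hs0.
clear f0 s0 hf0 hs0.
elim=> [|t s IH] f hf hs.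
  apply: Uext hf => z; case: eqP => [->//|/eqP ne]; apply: hs; by rewrite !inE ne.
case: (eqVneq t z0) => [et|ne].
  apply: IH hf _ => z hz; apply: hs; move: hz; rewrite !inE et.
  by case: (z == z0).
set g := fun z => lam z * f z - lam t * f z.
have hg : U g := UB _ _ (UL f hf) (UZ f (lam t) hf).
have hgs : forall z, z \notin z0 :: s -> g z = 0.
  move=> z; case: (eqVneq z t) => [->|nzt] hz; first by rewrite /g subrr.
  rewrite /g hs ?mulr0 ?subrr //; move: hz; rewrite !inE !negb_or nzt; by case/andP => -> ->.
have := UZ _ (lam z0 - lam t)^-1 (IH g hg hgs).
have hne : lam z0 - lam t != 0.
  by rewrite subr_eq0; apply/eqP => e; move/eqP: ne; apply; exact: linj.
apply: Uext => z; case: eqP => // _; rewrite /g /=; field; exact: hne.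
Qed.

Lemma ex_min (P : nat -> Prop) n0 : P n0 -> exists m, P m /\ forall k, P k -> (m <= k)%N.
Proof.
suff H : forall N n, (n <= N)%N -> P n -> exists m, P m /\ forall k, P k -> (m <= k)%N.
  by apply: H (leqnn n0).
elim=> [|N IH] n hn Pn.
  by exists n; split => // k _; move: hn; rewrite leqn0 => /eqP ->.
case: (classic (exists k, (k < n)%N /\ P k)) => [[k [hk Pk]]|nk].
  by apply: (IH k) => //; lia.
exists n; split => // k Pk; rewrite leqNgt; apply/negP => hkn; apply: nk; by exists k.
Qed.

Lemma fin_max (K : fieldType) (s : seq int) : forall (f : int -> K),
  (forall z, z \notin s -> f z = 0) -> forall z0, f z0 != 0 ->
  exists z, f z != 0 /\ forall z', z < z' -> f z' = 0.
Proof.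
elim: s => [|t s IH] f hs z0 hz0.
  by move: hz0; rewrite hs // eqxx.
case: (classic (exists z1, t < z1 /\ f z1 != 0)) => [[z1 [ht hz1]]|nz].
  pose g z := if t < z then f z else 0.
  have hg : forall z, z \notin s -> g z = 0.
    move=> z hz; rewrite /g; case: ifP => // htz; apply: hs.
    rewrite inE negb_or hz andbT; apply/eqP => e; by rewrite e ltxx in htz.
  have gz1 : g z1 != 0 by rewrite /g ht.
  have [z [gz gz']] := IH g hg z1 gz1.
  have htz : t < z by move: gz; rewrite /g; case: ifP => // _; rewrite eqxx.
  exists z; split; first by move: gz; rewrite /g htz.
  by move=> z' hz'; have := gz' z' hz'; rewrite /g (lt_trans htz hz').
have nz' : forall z1, t < z1 -> f z1 = 0.
  move=> z1 h; apply/eqP; apply: NNPP => hn; apply: nz; exists z1; split => //; exact/negP.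
case: (eqVneq (f t) 0) => [ft|ft]; last by exists t; split.
pose g z := if z == t then 0 else f z.
have hg : forall z, z \notin s -> g z = 0.
  move=> z hz; rewrite /g; case: eqP => // /eqP nzt; apply: hs; by rewrite inE negb_or nzt hz.
have hgz0 : g z0 != 0.
  by rewrite /g; case: (eqVneq z0 t) => [e|//]; rewrite e ft eqxx in hz0.
have [z [gz gz']] := IH g hg z0 hgz0.
exists z; split.
  by move: gz; rewrite /g; case: (eqVneq z t) => [_|_]; rewrite ?eqxx.
move=> z' hz'; have := gz' z' hz'; rewrite /g; case: (eqVneq z' t) => [->|] //.
Qed.

Lemma fin_min (K : fieldType) (s : seq int) (f : int -> K) :
  (forall z, z \notin s -> f z = 0) -> forall z0, f z0 != 0 ->
  exists z, f z != 0 /\ forall z', z' < z -> f z' = 0.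
Proof.
move=> hs z0 hz0.
have hs' : forall z, z \notin map -%R s -> f (- z) = 0.
  move=> z hz; apply: hs; apply: contra hz => hz; by rewrite -[z]opprK map_f.
have hz0' : f (- - z0) != 0 by rewrite opprK.
have [z [h1 h2]] := @fin_max K (map -%R s) (fun z => f (- z)) hs' (- z0) hz0'.
exists (- z); split => // z' hz'; rewrite -[z']opprK; apply: h2; lia.
Qed.

Section PartB.
Variables (K : fieldType) (q : K).
Hypothesis hq0 : q != 0.
Hypothesis hqr : forall n : nat, (0 < n)%N -> q ^+ n != 1.
Local Notation qp := (qp K).
Local Notation qm := (qmul q).
Local Notation x := (qa K - 1).

Lemma qmul_sc (c c' : K) i j : qm (qmono c 0 0) (qmono c' i j) = qmono (c * c') i j.
Proof. by rewrite qmul_mono mul0n expr0 invr1 mulr1. Qed.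

Lemma qmul_a_mono (c : K) i j : qm (qa K) (qmono c i j) = qmono c i.+1 j.
Proof. by rewrite /qa qmul_mono mul0n expr0 invr1 !mulr1 mul1r add0n add1n. Qed.

Definition pi (p : qp) (n : nat) : K :=
  qsum (fun c i j => if j == n then c * q ^+ (i * j) else 0) p.

Lemma piD p r n : pi (p + r) n = pi p n + pi r n.
Proof.
rewrite /pi qsumD // => [i j|c d i j]; first by case: eqP; rewrite ?mul0r.
by case: eqP; rewrite ?mulrDl ?addr0.
Qed.

Lemma pi0 n : pi 0 n = 0.
Proof. by rewrite /pi qsum0. Qed.

Lemma piN p n : pi (- p) n = - pi p n.
Proof. by apply/eqP; rewrite -addr_eq0 -piD addNr pi0. Qed.

Lemma piB p r n : pi (p - r) n = pi p n - pi r n.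
Proof. by rewrite piD piN. Qed.

Lemma pi_mono (c : K) i j n : pi (qmono c i j) n = if j == n then c * q ^+ (i * j) else 0.
Proof. by rewrite /pi qsum_qmono // => i' j'; case: eqP; rewrite ?mul0r. Qed.

Lemma pi_sum m (F : 'I_m -> qp) n : pi (\sum_(k < m) F k) n = \sum_(k < m) pi (F k) n.
Proof. by rewrite (big_morph (pi^~ n) (fun p r => piD p r n) (pi0 n)). Qed.

Lemma pi_polyC (s : {poly K}) n : pi s%:P n = s`_n.
Proof.
rewrite polyC_qsum pi_sum.
under eq_bigr do rewrite pi_mono mul0n expr0 mulr1 eq_sym.
rewrite (sum_delta _ n (fun k => s`_k)); case: ltnP => // h.
by rewrite nth_default.
Qed.

Lemma qmul_x_mono (c : K) i j : qm (qmono c i j) x = qmono (c / q ^+ j) i.+1 j - qmono c i j.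
Proof. by rewrite qmulBr qmul1r /qa qmul_mono muln1 addn1 addn0 mulr1. Qed.

Lemma pi_Ax v n : pi (qm v x) n = 0.
Proof.
elim/qind: v => [|p r hp hr|c i j]; first by rewrite qmul0l pi0.
  by rewrite qmulDl piD hp hr addr0.
rewrite qmul_x_mono piB !pi_mono; case: eqP => _; last by rewrite subrr.
rewrite mulSn exprD; apply/eqP; rewrite subr_eq0; apply/eqP; field.
by rewrite ?expf_neq0.
Qed.

Lemma pi_a p n : pi (qm (qa K) p) n = q ^+ n * pi p n.
Proof.
elim/qind: p => [|p r hp hr|c i j]; first by rewrite qmul0r !pi0 mulr0.
  by rewrite qmulDr !piD hp hr mulrDr.
rewrite /qa qmul_mono !pi_mono mul0n expr0 invr1 mulr1 mul1r add0n add1n.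
case: eqP => [<-|]; last by rewrite mulr0.
by rewrite mulSn exprD mulrCA.
Qed.

Lemma pi_sc (c : K) p n : pi (qm (qmono c 0 0) p) n = c * pi p n.
Proof.
elim/qind: p => [|p r hp hr|c' i j]; first by rewrite qmul0r !pi0 mulr0.
  by rewrite qmulDr !piD hp hr mulrDr.
by rewrite qmul_sc !pi_mono; case: eqP; rewrite ?mulr0 ?mulrA.
Qed.

Lemma pi_supp p : exists s : seq nat, forall n, n \notin s -> pi p n = 0.
Proof.
elim/qind: p => [|p r [s1 h1] [s2 h2]|c i j].
- by exists [::] => n _; rewrite pi0.
- exists (s1 ++ s2) => n; rewrite mem_cat negb_or => /andP[n1 n2].
  by rewrite piD h1 // h2 // addr0.
- exists [:: j] => n; rewrite inE pi_mono eq_sym => /negbTE ->; done.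
Qed.

Lemma mono_red (c : K) i j :
  exists v, qmono c i j = qmono (c * q ^+ (i * j)) 0 j + qm v x.
Proof.
elim: i c => [|i IH] c.
  by exists 0; rewrite qmul0l addr0 mul0n expr0 mulr1.
have [v hv] := IH c.
have e1 : qmono c i.+1 j = qm (qa K) (qmono c i j) by rewrite qmul_a_mono.
set d := c * q ^+ (i * j).
exists (qmono (d * q ^+ j) 0 j + qm (qa K) v).
rewrite e1 hv qmulDr qmulDl -qmulA.
rewrite qmul_a_mono.
rewrite qmul_x_mono.
have h1 : d * q ^+ j / q ^+ j = d by field; rewrite expf_neq0.
have h2 : c * q ^+ (i.+1 * j) = d * q ^+ j.
  by rewrite /d mulSn exprD -mulrA [q ^+ (i * j) * _]mulrC.
rewrite h1 h2 -/d.
by rewrite [RHS]addrCA addrA subrK.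
Qed.

Lemma pi_red p : exists v (s : {poly K}), p = s%:P + qm v x /\ forall n, s`_n = pi p n.
Proof.
elim/qind: p => [|p r [v1 [s1 [e1 h1]]] [v2 [s2 [e2 h2]]]|c i j].
- exists 0, 0; split; first by rewrite qmul0l addr0.
  by move=> n; rewrite coef0 pi0.
- exists (v1 + v2), (s1 + s2); split.
    by rewrite {1}e1 {1}e2 qmulDl polyCD addrACA.
  by move=> n; rewrite coefD piD h1 h2.
- have [v hv] := mono_red c i j.
  exists v, ((c * q ^+ (i * j)) *: 'X^j); split.
    by rewrite hv /qmono expr0 !mulr1.
  move=> n; rewrite coefZ coefXn pi_mono eq_sym.
  by case: eqP; rewrite ?mulr1 ?mulr0.
Qed.

Lemma pi_ker p : (forall n, pi p n = 0) -> lprincipal q x p.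
Proof.
move=> h; have [v [s [e hs]]] := pi_red p.
have s0 : s = 0 by apply/polyP => n; rewrite hs h coef0.
by exists v; rewrite e s0 add0r.
Qed.


Lemma expq_eq n m : (n <= m)%N -> q ^+ n = q ^+ m -> n = m.
Proof.
move=> h e.
have h1 : q ^+ (m - n) = 1.
  by apply: (mulfI (expf_neq0 n hq0)); rewrite -exprD subnKC // mulr1 e.
case: (posnP (m - n)) => [/eqP|hp].
  by rewrite subn_eq0 => hmn; apply/eqP; rewrite eqn_leq h hmn.
by have := hqr hp; rewrite h1 eqxx.
Qed.

Lemma expq_inj : injective (fun k : nat => q ^+ k).
Proof.
move=> n m /= e; case: (leqP n m) => h; first exact: expq_eq.
by symmetry; apply: expq_eq => //; exact: ltnW.
Qed.

Definition Cm (m : nat) (p : qp) := forall n, pi p n != 0 -> (m <= n)%N.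

Lemma pi_shift r (c : K) k n : (n < k)%N -> pi (qm r (qmono c 0 k)) n = 0.
Proof.
move=> hnk; elim/qind: r => [|p r hp hr|c' i j]; first by rewrite qmul0l pi0.
  by rewrite qmulDl piD hp hr addr0.
rewrite qmul_mono pi_mono.
have -> : (j + k == n) = false by apply/negbTE; lia.
done.
Qed.

Lemma pi_mulr r p n : (forall k, (k <= n)%N -> pi p k = 0) -> pi (qm r p) n = 0.
Proof.
move=> h; have [v [s [e hs]]] := pi_red p.
rewrite e (qmulDr _ r) piD -qmulA pi_Ax addr0 polyC_qsum qmul_sumr pi_sum big1 // => -[k hk] _ /=.
case: (leqP k n) => hkn; first by rewrite hs h // qmono0 qmul0r pi0.
exact: pi_shift.
Qed.

Lemma Cm_mul m r p : Cm m p -> Cm m (qm r p).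
Proof.
move=> h n hn; rewrite leqNgt; apply/negP => hnm; move/negP: hn; apply.
apply/eqP; apply: pi_mulr => k hk.
by case: (eqVneq (pi p k) 0) => // /h; lia.
Qed.

Lemma qw_mono : qm (qa K) (qb K) = qmono 1 1 1.
Proof. by rewrite /qa /qb qmul_mono mul0n expr0 invr1 !mulr1. Qed.

Lemma qpow_mono m : exists c, c != 0 /\ qpow q (qm (qa K) (qb K)) m = qmono c m m.
Proof.
elim: m => [|m [c [c0 hc]]]; first by exists 1; split; [exact: oner_neq0 | exact: qone].
exists (1 * c * q ^- (1 * m)); split.
  by rewrite mul1r mulf_neq0 // invr_neq0 // expf_neq0.
by rewrite /= -/(qpow q _ m) hc qw_mono qmul_mono.
Qed.

Lemma pi_wpow (c : K) m u n : (n < m)%N -> pi (qm (qmono c m m) u) n = 0.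
Proof.
move=> hnm; elim/qind: u => [|p r hp hr|c' i j]; first by rewrite qmul0r pi0.
  by rewrite qmulDr piD hp hr addr0.
rewrite qmul_mono pi_mono.
have -> : (m + j == n) = false by apply/negbTE; lia.
done.
Qed.

Lemma wpow_C m p : quot_wpow q (qm (qa K) (qb K)) x m p <-> Cm m p.
Proof.
split.
  case=> u [v ->] n; rewrite piD pi_Ax addr0.
  have [c [_ ->]] := qpow_mono m.
  move=> hn; rewrite leqNgt; apply/negP => h; by rewrite pi_wpow ?eqxx in hn.
move=> hC; have [v [s [e hs]]] := pi_red p.
have [c [c0 hw]] := qpow_mono m.
suff [u [v' ev]] : exists u v', (s%:P : qp) = qm (qpow q (qm (qa K) (qb K)) m) u + qm v' x.
  by exists u, (v' + v); rewrite e ev (qmulDl _ v') addrA.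
rewrite polyC_qsum; apply: (@big_ind _ (fun y : qp => exists u v', y = qm (qpow q (qm (qa K) (qb K)) m) u + qm v' x)).
- by exists 0, 0; rewrite qmul0r qmul0l addr0.
- move=> y1 y2 [u1 [v1 ->]] [u2 [v2 ->]]; exists (u1 + u2), (v1 + v2).
  by rewrite (qmulDr _ _ u1) (qmulDl _ v1) addrACA.
move=> [k hk] _ /=; case: (ltnP k m) => hkm.
  have -> : s`_k = 0.
    by rewrite hs; case: (eqVneq (pi p k) 0) => // /hC; rewrite leqNgt hkm.
  by exists 0, 0; rewrite qmono0 qmul0r qmul0l addr0.
set d := s`_k / (c * q ^+ (m * k)).
have [v0 hv0] := mono_red (c * d) m k.
exists (qmono d 0 (k - m)), (- v0).
rewrite hw qmul_mono muln0 expr0 invr1 mulr1 addn0 subnKC // hv0 (qmulNl _ v0).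
have -> : c * d * q ^+ (m * k) = s`_k by rewrite /d; field; rewrite ?mulf_neq0 ?expf_neq0.
by rewrite addrK.
Qed.


Lemma qb_mono_step n : qm (qb K) (qmono 1 0 n) = qmono 1 0 n.+1.
Proof. by rewrite /qb qmul_mono muln0 expr0 invr1 !mulr1 add0n add1n. Qed.

Lemma L_char L : quot_submodule q x L -> quot_nonzero q x L ->
  exists m, forall y, L y <-> Cm m y.
Proof.
move=> [[L0 [LB LM]] LAx] [y [Ly ny]].
have LD : forall a b, L a -> L b -> L (a + b).
  by move=> a b ha hb; have := LB a (0 - b) ha (LB 0 b L0 hb); rewrite sub0r opprK.
pose P n := L (qmono 1 0 n).
have F1 : forall p n, L p -> pi p n != 0 -> P n.
  move=> p n hp hn; have [s hs] := pi_supp p.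
  pose U := fun f : nat -> K => exists p, L p /\ forall k, pi p k = f k.
  have U1 : forall f g, (forall z, f z = g z) -> U f -> U g.
    by move=> f g hfg [p0 [h1 h2]]; exists p0; split => // k; rewrite h2.
  have U2 : forall f g, U f -> U g -> U (fun z => f z - g z).
    move=> f g [p1 [h1 e1]] [p2 [h2 e2]]; exists (p1 - p2); split; first exact: LB.
    by move=> k; rewrite piB e1 e2.
  have U3 : forall f c, U f -> U (fun z => c * f z).
    move=> f c [p1 [h1 e1]]; exists (qm (qmono c 0 0) p1); split; first exact: LM.
    by move=> k; rewrite pi_sc e1.
  have U4 : forall f, U f -> U (fun z => q ^+ z * f z).
    move=> f [p1 [h1 e1]]; exists (qm (qa K) p1); split; first exact: LM.
    by move=> k; rewrite pi_a e1.
  have Up : U (pi p) by exists p.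
  have [p' [hp' e']] := @sep K nat U (fun k => q ^+ k) expq_inj U1 U2 U3 U4 (pi p) s n Up hs.
  have [v [s' [e hs']]] := pi_red p'.
  have es' : s' = (pi p n) *: 'X^n.
    apply/polyP => k; rewrite hs' e' coefZ coefXn.
    by case: eqP; rewrite ?mulr1 ?mulr0.
  have Lm : L (qmono (pi p n) 0 n).
    have : L (p' - qm v x) by apply: LB => //; apply: LAx; exists v.
    by rewrite e addrK es' /qmono expr0 mulr1.
  have := LM (qmono (pi p n)^-1 0 0) _ Lm.
  by rewrite qmul_sc mulVf.
have F2 : forall n, P n -> P n.+1.
  by move=> n hn; have := LM (qb K) _ hn; rewrite qb_mono_step.
have F3 : forall p, (forall n, pi p n != 0 -> P n) -> L p.
  move=> p hp; have [v [s [e hs]]] := pi_red p.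
  rewrite e; apply: (LD); last by apply: LAx; exists v.
  rewrite polyC_qsum; apply: (@big_ind _ L) => //.
  move=> k _; case: (eqVneq (pi p k) 0) => hk0.
    by rewrite hs hk0 qmono0.
  by have := LM (qmono s`_k 0 0) _ (hp _ hk0); rewrite qmul_sc mulr1.
have [n0 hn0] : exists n, pi y n != 0.
  apply: NNPP => hne; apply: ny; apply: pi_ker => n; apply/eqP.
  apply: NNPP => h; apply: hne; exists n; exact/negP.
have [m [Pm mmin]] := ex_min (F1 _ _ Ly hn0).
have Pup : forall n, (m <= n)%N -> P n.
  move=> n hmn; rewrite -(subnKC hmn); elim: (n - m)%N => [|k IH].
    by rewrite addn0.
  by rewrite addnS; apply: F2.
exists m => p; split.
  by move=> hp n hn; exact: mmin _ (F1 _ _ hp hn).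
by move=> hC; apply: F3 => n hn; apply: Pup; exact: hC.
Qed.


Local Notation W := (qm (qa K) (qb K)).
Local Notation J := (lprincipal q (qm (qa K) (qb K) - 1)).

Definition phi (p : qp) (z : int) : K :=
  qsum (fun c i j => if (i%:Z - j%:Z == z) then c * q ^+ 'C(j, 2) else 0) p.

Lemma phiD p r z : phi (p + r) z = phi p z + phi r z.
Proof.
rewrite /phi qsumD // => [i j|c d i j]; first by case: eqP; rewrite ?mul0r.
by case: eqP; rewrite ?mulrDl ?addr0.
Qed.

Lemma phi0 z : phi 0 z = 0.
Proof. by rewrite /phi qsum0. Qed.

Lemma phiN p z : phi (- p) z = - phi p z.
Proof. by apply/eqP; rewrite -addr_eq0 -phiD addNr phi0. Qed.

Lemma phiB p r z : phi (p - r) z = phi p z - phi r z.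
Proof. by rewrite phiD phiN. Qed.

Lemma phi_mono (c : K) i j z :
  phi (qmono c i j) z = if (i%:Z - j%:Z == z) then c * q ^+ 'C(j, 2) else 0.
Proof. by rewrite /phi qsum_qmono // => i' j'; case: eqP; rewrite ?mul0r. Qed.

Lemma phi_supp p : exists s : seq int, forall z, z \notin s -> phi p z = 0.
Proof.
elim/qind: p => [|p r [s1 h1] [s2 h2]|c i j].
- by exists [::] => n _; rewrite phi0.
- exists (s1 ++ s2) => n; rewrite mem_cat negb_or => /andP[n1 n2].
  by rewrite phiD h1 // h2 // addr0.
- exists [:: i%:Z - j%:Z] => n; rewrite inE phi_mono eq_sym => /negbTE ->; done.
Qed.

Lemma phi_sc (c : K) p z : phi (qm (qmono c 0 0) p) z = c * phi p z.
Proof.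
elim/qind: p => [|p r hp hr|c' i j]; first by rewrite qmul0r !phi0 mulr0.
  by rewrite qmulDr !phiD hp hr mulrDr.
by rewrite qmul_sc !phi_mono; case: eqP; rewrite ?mulr0 ?mulrA.
Qed.

Lemma phi_one z : phi 1 z = if z == 0 then 1 else 0.
Proof. by rewrite qone phi_mono subrr eq_sym mul1r. Qed.

Lemma binS2 j : 'C(j.+1, 2) = ('C(j, 2) + j)%N.
Proof. by rewrite binS bin1. Qed.

Lemma qmul_w1_mono (c : K) i j :
  qm (qmono c i j) (W - 1) = qmono (c / q ^+ j) i.+1 j.+1 - qmono c i j.
Proof. by rewrite qmulBr qmul1r qw_mono qmul_mono muln1 !addn1 mulr1. Qed.

Lemma phi_J y z : phi (qm y (W - 1)) z = 0.
Proof.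
elim/qind: y => [|p r hp hr|c i j]; first by rewrite qmul0l phi0.
  by rewrite qmulDl phiD hp hr addr0.
rewrite qmul_w1_mono phiB !phi_mono.
have -> : (i.+1%:Z - j.+1%:Z) = i%:Z - j%:Z by lia.
case: eqP => _; last by rewrite subrr.
rewrite binS2 exprD; apply/eqP; rewrite subr_eq0; apply/eqP; field.
by rewrite ?expf_neq0.
Qed.

Lemma phi_w p z : phi (qm W p) z = q ^ (- z) * phi p z.
Proof.
elim/qind: p => [|p r hp hr|c i j]; first by rewrite qmul0r !phi0 mulr0.
  by rewrite qmulDr !phiD hp hr mulrDr.
rewrite qw_mono qmul_mono !phi_mono.
have -> : ((1 + i)%N%:Z - (1 + j)%N%:Z) = i%:Z - j%:Z by lia.
case: eqP => [<-|]; last by rewrite mulr0.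
have -> : - (i%:Z - j%:Z) = j%:Z + (- i%:Z) by rewrite opprB addrC.
rewrite expfzDr // -exprnN -exprnP add1n binS2 exprD mul1n mul1r.
field; by rewrite ?expf_neq0.
Qed.

Lemma phi_a (d : K) p z : phi (qm (qmono d 1 0) p) z = d * phi p (z - 1).
Proof.
elim/qind: p => [|p r hp hr|c i j]; first by rewrite qmul0r !phi0 mulr0.
  by rewrite qmulDr !phiD hp hr mulrDr.
rewrite qmul_mono !phi_mono mul0n expr0 invr1 mulr1 add0n.
have -> : ((1 + i)%N%:Z - j%:Z == z) = (i%:Z - j%:Z == z - 1).
  by apply/eqP/eqP => h; lia.
by case: eqP; rewrite ?mulr0 ?mulrA.
Qed.

Lemma J0 : J 0.
Proof. by exists 0; rewrite qmul0l. Qed.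

Lemma JD a b : J a -> J b -> J (a + b).
Proof. by move=> [c1 ->] [c2 ->]; exists (c1 + c2); rewrite qmulDl. Qed.

Lemma mono_redJ (c : K) i j :
  J (qmono c i j - qmono (c * q ^+ 'C(j, 2) / q ^+ 'C(j - i, 2)) (i - j) (j - i)).
Proof.
elim: i j c => [|i IH] j c.
  rewrite sub0n subn0 mulfK ?expf_neq0 // subrr; exact: J0.
case: j => [|j].
  by rewrite subn0 sub0n !bin0n /= expr0 invr1 !mulr1 subrr; exact: J0.
rewrite !subSS.
have h1 : J (qmono c i.+1 j.+1 - qmono (c * q ^+ j) i j).
  exists (qmono (c * q ^+ j) i j); rewrite qmul_w1_mono.
  by rewrite mulfK ?expf_neq0.
have := JD h1 (IH j (c * q ^+ j)).
rewrite addrA subrK.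
have -> : c * q ^+ j * q ^+ 'C(j, 2) / q ^+ 'C(j - i, 2) =
          c * q ^+ 'C(j.+1, 2) / q ^+ 'C(j - i, 2).
  by rewrite binS2 exprD [q ^+ 'C(j, 2) * _]mulrC mulrA.
done.
Qed.

Definition redJ (p : qp) : qp :=
  qsum (fun c i j => qmono (c * q ^+ 'C(j, 2) / q ^+ 'C(j - i, 2)) (i - j) (j - i)) p.

Lemma red_J p : J (p - redJ p).
Proof.
elim/qind: p => [|p r hp hr|c i j].
- by rewrite /redJ qsum0 subrr; exact: J0.
- rewrite /redJ qsumD.
  + by rewrite opprD addrACA; exact: JD.
  + by move=> i j; rewrite !mul0r qmono0.
  + by move=> c d i j; rewrite !mulrDl qmonoD.
- rewrite /redJ qsum_qmono; first exact: mono_redJ.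
  by move=> i' j'; rewrite !mul0r qmono0.
Qed.

Lemma pair_eq i j i' j' : minn i' j' = 0%N ->
  ((i' == i - j)%N && (j' == j - i)%N) = (i%:Z - j%:Z == i'%:Z - j'%:Z).
Proof.
move=> h; apply/andP/eqP => [[/eqP e1 /eqP e2]|e]; [|split; apply/eqP]; lia.
Qed.

Lemma coef_redJ p i' j' : qcoef (redJ p) i' j' =
  if minn i' j' == 0%N then (q ^+ 'C(j', 2))^-1 * phi p (i'%:Z - j'%:Z) else 0.
Proof.
rewrite /redJ qcoef_qsum; case: eqP => hmin.
  rewrite /phi -qsumZ; apply: qsum_ext => c i j; rewrite qcoef_qmono pair_eq //.
  case: eqP => [e|]; last by rewrite mulr0.
  have -> : (j - i)%N = j' by lia.
  by rewrite mulrC.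
apply: qsum_zero => c i j; rewrite qcoef_qmono.
by case: andP => // -[/eqP e1 /eqP e2]; exfalso; apply: hmin; lia.
Qed.

Lemma phi_ker p : (forall z, phi p z = 0) -> J p.
Proof.
move=> h.
have e : redJ p = 0.
  apply/polyP => i; apply/polyP => j.
  rewrite -[LHS]/(qcoef _ i j) coef_redJ h mulr0 !coef0.
  by case: eqP.
by have := red_J p; rewrite e subr0.
Qed.


Lemma qz_eq1 (z : int) : q ^ z = 1 -> z = 0.
Proof.
case: z => n.
  rewrite -exprnP => h; case: (posnP n) => [->//|hp].
  by have := hqr hp; rewrite h eqxx.
rewrite NegzE -exprnN => /eqP; rewrite invr_eq1 => /eqP h.
by have := hqr (ltn0Sn n); rewrite h eqxx.
Qed.

Lemma lamz_inj : injective (fun z : int => q ^ (- z)).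
Proof.
move=> z1 z2 /= e.
have h : q ^ (z2 - z1) = 1.
  by rewrite addrC expfzDr // e -expfzDr // addNr expr0z.
by have := qz_eq1 h => /eqP; rewrite subr_eq0 => /eqP.
Qed.

Lemma qsigmaE p : qsigma q p = qsum (fun c i j => qmono (c * q ^ (j%:Z - i%:Z)) i j) p.
Proof. by []. Qed.

Lemma qsigmaD p r : qsigma q (p + r) = qsigma q p + qsigma q r.
Proof.
rewrite !qsigmaE qsumD //.
- by move=> i j; rewrite mul0r qmono0.
- by move=> c d i j; rewrite mulrDl qmonoD.
Qed.

Lemma qsigma_mono (c : K) i j : qsigma q (qmono c i j) = qmono (c * q ^ (j%:Z - i%:Z)) i j.
Proof.
rewrite qsigmaE qsum_qmono //.
by move=> i' j'; rewrite mul0r qmono0.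
Qed.

Lemma sigx m : exists d : K, d != 0 /\ iter m (qsigma q) x = qmono d 1 0 + qmono (-1) 0 0.
Proof.
elim: m => [|m [d [d0 hd]]].
  by exists 1; split; [exact: oner_neq0 | rewrite /= qmonoN -qone].
exists (d * q ^ (0%:Z - 1%:Z)); split.
  by rewrite mulf_neq0 // expfz_neq0.
by rewrite /= hd qsigmaD !qsigma_mono subrr expr0z mulr1.
Qed.


Lemma wpow_sub n : quot_submodule q x (quot_wpow q W x n).
Proof.
split; [split; [|split]|].
- by apply/wpow_C => k; rewrite pi0 eqxx.
- move=> y1 y2 /wpow_C h1 /wpow_C h2; apply/wpow_C => k; rewrite piB => hk.
  case: (eqVneq (pi y1 k) 0) => [e1|]; last exact: h1.
  by apply: h2; move: hk; rewrite e1 sub0r oppr_eq0.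
- by move=> r y /wpow_C h; apply/wpow_C; exact: Cm_mul.
- by move=> y [v ->]; apply/wpow_C => k; rewrite pi_Ax eqxx.
Qed.

Lemma pi_b n k : pi (qmono 1 0 n) k = if n == k then 1 else 0.
Proof. by rewrite pi_mono mul0n expr0 mulr1. Qed.

Lemma main_stmt :
  let a := qa K in
  let b := qb K in
  let w := qmul q a b in
  let J := lprincipal q (w - 1) in
  let x := a - 1 in
  (maximal_left_ideal q J /\
   forall (m : nat) (c : qp), ~ J (qmul q (iter m (qsigma q) x) c - 1)) /\
  (~ quot_artinian q x /\
   (forall L : qp -> Prop, quot_submodule q x L ->
      (quot_nonzero q x L <-> exists m : nat, forall y, L y <-> quot_wpow q w x m y)) /\
   (forall m : nat,
      (forall y, quot_wpow q w x m.+1 y -> quot_wpow q w x m y) /\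
      exists y, quot_wpow q w x m y /\ ~ quot_wpow q w x m.+1 y)).
Proof.
cbv zeta.
split; [split|split; [|split]].
- split; [|split].
  + split; [exact: J0|split].
    * by move=> y1 y2 [c1 ->] [c2 ->]; exists (c1 - c2); rewrite qmulBl.
    * by move=> r y [c ->]; exists (qm r c); rewrite qmulA.
  + case=> c e; have := phi_J c 0; rewrite -e phi_one eqxx => /eqP.
    by rewrite oner_eq0.
  + move=> L [L0 [LB LM]] JL.
    case: (classic (exists y, L y /\ ~ J y)) => [[y [Ly nJy]]|nex]; last first.
      left => y; split => [Ly|]; last exact: JL.
      by apply: NNPP => nJ; apply: nex; exists y.
    right.
    have [z0 hz0] : exists z, phi y z != 0.
      apply: NNPP => hne; apply: nJy; apply: phi_ker => z; apply/eqP.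
      apply: NNPP => h; apply: hne; exists z; exact/negP.
    have [s hs] := phi_supp y.
    pose U := fun f : int -> K => exists p, L p /\ forall k, phi p k = f k.
    have U1 : forall f g, (forall z, f z = g z) -> U f -> U g.
      by move=> f g hfg [p0 [h1 h2]]; exists p0; split => // k; rewrite h2.
    have U2 : forall f g, U f -> U g -> U (fun z => f z - g z).
      move=> f g [p1 [h1 e1]] [p2 [h2 e2]]; exists (p1 - p2); split; first exact: LB.
      by move=> k; rewrite phiB e1 e2.
    have U3 : forall f c, U f -> U (fun z => c * f z).
      move=> f c [p1 [h1 e1]]; exists (qm (qmono c 0 0) p1); split; first exact: LM.
      by move=> k; rewrite phi_sc e1.
    have U4 : forall f, U f -> U (fun z => q ^ (- z) * f z).
      move=> f [p1 [h1 e1]]; exists (qm W p1); split; first exact: LM.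
      by move=> k; rewrite phi_w e1.
    have Uy : U (phi y) by exists y.
    have [p' [hp' e']] := @sep K int U (fun z => q ^ (- z)) lamz_inj U1 U2 U3 U4 (phi y) s z0 Uy hs.
    have [i0 [j0 ez]] : exists i0 j0 : nat, z0 = i0%:Z - j0%:Z.
      case: (z0) => n; first by exists n, 0%N; rewrite subr0.
      by exists 0%N, n.+1; rewrite NegzE sub0r.
    set c0 := phi y z0 in e' hz0.
    pose E := qmono (1 : K) i0 j0.
    have LE : L E.
      pose p'' := qm (qmono (q ^+ 'C(j0, 2) / c0) 0 0) p'.
      have Lp'' : L p'' by apply: LM.
      have JE : J (p'' - E).
        apply: phi_ker => z; rewrite phiB phi_sc e' /E phi_mono -ez eq_sym.
        case: eqP => _; last by rewrite mulr0 subrr.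
        by apply/eqP; rewrite subr_eq0; apply/eqP; field.
      by have := LB _ _ Lp'' (JL _ JE); rewrite opprB addrC subrK.
    pose r := qmono (q ^+ (i0 * i0) / q ^+ 'C(i0 + j0, 2)) j0 i0.
    have J1 : J (qm r E - 1).
      apply: phi_ker => z; rewrite phiB phi_one qmul_mono phi_mono.
      have -> : ((j0 + i0)%N%:Z - (i0 + j0)%N%:Z) = 0 by lia.
      rewrite eq_sym; case: eqP => _; last by rewrite subrr.
      by apply/eqP; rewrite subr_eq0; apply/eqP; field; rewrite ?expf_neq0.
    by have := LB _ _ (LM r _ LE) (JL _ J1); rewrite opprB addrC subrK.
- move=> m c [c' e]; have [d [d0 hd]] := sigx m; rewrite hd in e.
  have hz : forall z, d * phi c (z - 1) - phi c z = if z == 0 then 1 else 0.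
    move=> z; have := phi_J c' z; rewrite -e phiB phi_one qmulDl phiD phi_a phi_sc.
    by move/eqP; rewrite mulN1r subr_eq0 => /eqP.
  have [s hs] := phi_supp c.
  have [z1 hz1] : exists z, phi c z != 0.
    apply: NNPP => hne.
    have h0 : forall z, phi c z = 0.
      move=> z; apply/eqP; apply: NNPP => h; apply: hne; exists z; exact/negP.
    by have := hz 0; rewrite !h0 mulr0 subrr eqxx => /eqP; rewrite eq_sym oner_eq0.
  have [zM [hM1 hM2]] := fin_max hs hz1.
  have [zm [hm1 hm2]] := fin_min hs hz1.
  have e1 : zM + 1 = 0.
    have := hz (zM + 1); rewrite addrK (hM2 (zM + 1)); last by lia.
    rewrite subr0; case: eqP => // _ h; exfalso.
    by move: (mulf_neq0 d0 hM1); rewrite h eqxx.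
  have e2 : zm = 0.
    have := hz zm; rewrite (hm2 (zm - 1)); last by lia.
    rewrite mulr0 sub0r; case: eqP => // _ /eqP; rewrite oppr_eq0 => h.
    by rewrite h in hm1.
  have : zm <= zM.
    rewrite leNgt; apply/negP => h; move: hm1; by rewrite hM2 ?eqxx.
  lia.
- move=> h.
  have hdesc : forall n y, quot_wpow q W x n.+1 y -> quot_wpow q W x n y.
    move=> n y /wpow_C hy; apply/wpow_C => k hk; have := hy k hk; exact: ltnW.
  have [n hn] := h (fun n => quot_wpow q W x n) wpow_sub hdesc.
  + have := hn n.+1 (leqnSn n) (qmono 1 0 n); rewrite !wpow_C.
    have hC : Cm n (qmono 1 0 n) by move=> k; rewrite pi_b; case: (eqVneq n k) => [->|_] //; rewrite eqxx.
    case=> _ /(_ hC) /(_ n); rewrite pi_b eqxx oner_neq0 ltnn.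
    by move=> /(_ isT).
- move=> L hL; split.
  + move=> hnz; have [m hm] := L_char hL hnz; exists m => y.
    by split => h; [apply/wpow_C; exact/hm | apply/hm; exact/wpow_C].
  + case=> m hm; have [cw [cw0 hw]] := qpow_mono m.
    exists (qpow q W m); split.
      by apply/hm; exists 1, 0; rewrite qmul1r qmul0l addr0.
    move=> [v e]; have := pi_Ax v m; rewrite -e hw pi_mono eqxx => /eqP.
    by rewrite mulf_eq0 (negbTE cw0) /= expf_eq0 (negbTE hq0) andbF.
- move=> m; split.
    by move=> y /wpow_C h; apply/wpow_C => n hn; apply: ltnW; exact: h.
  exists (qmono 1 0 m); split.
    by apply/wpow_C => n; rewrite pi_b; case: (eqVneq m n) => [->|_] //; rewrite eqxx.
  move/wpow_C => h; have := h m; rewrite pi_b eqxx oner_neq0 ltnn.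
  by move=> /(_ isT).
Qed.

End PartB.

Theorem proposition3p2 (K : fieldType) (q : K) :
  q != 0 -> (forall n : nat, (0 < n)%N -> q ^+ n != 1) ->
  let a := qa K in
  let b := qb K in
  let w := qmul q a b in
  let J := lprincipal q (w - 1) in
  let x := a - 1 in
  (* (a) *)
  (maximal_left_ideal q J /\
   forall (m : nat) (c : qp K), ~ J (qmul q (iter m (qsigma q) x) c - 1)) /\
  (* (b) *)
  (~ quot_artinian q x /\
   (forall L : qp K -> Prop, quot_submodule q x L ->
      (quot_nonzero q x L <-> exists m : nat, forall y, L y <-> quot_wpow q w x m y)) /\
   (forall m : nat,
      (forall y, quot_wpow q w x m.+1 y -> quot_wpow q w x m y) /\
      exists y, quot_wpow q w x m y /\ ~ quot_wpow q w x m.+1 y)).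
Proof. move=> h1 h2; exact: (main_stmt h1 h2). Qed.
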